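(* Let $q_1=(1,1,1)$, $q_2=(-1,-1,1)$, $q_3=(-1,1,-1)$, $q_4=(1,-1,-1)$ be the vertices of a regular tetrahedron in $\mathbb{R}^3$, let $t\in(0,1)$, and let $q_{j+4}=tq_j$ for $j=1,\dots,4$. Suppose that positive masses $m_1,\dots,m_8$ placed at $q_1,\dots,q_8$ form a central configuration. Then $m_1=m_2=m_3=m_4$ and $m_5=m_6=m_7=m_8$.
   Context: A configuration $q=(q_1,\dots,q_N)$ of distinct points in $\mathbb{R}^3$ with masses $m_1,\dots,m_N$ is a central configuration if there exists $c\in\mathbb{R}$ such that $\sum_{j\neq i} m_j\left(\frac{1}{|q_j-q_i|^3}-c\right)(q_j-q_i)=0$ for all $i=1,\dots,N$. *)

(* Defs.v *)
From Stdlib Require Import Reals Lra List.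
Open Scope R_scope.

Definition vec3 : Type := (R * R * R)%type.

Definition vx (v : vec3) : R := fst (fst v).
Definition vy (v : vec3) : R := snd (fst v).
Definition vz (v : vec3) : R := snd v.

Definition vsub (a b : vec3) : vec3 := (vx a - vx b, vy a - vy b, vz a - vz b).
Definition vscale (c : R) (a : vec3) : vec3 := (c * vx a, c * vy a, c * vz a).
Definition vnorm (a : vec3) : R := sqrt (vx a ^ 2 + vy a ^ 2 + vz a ^ 2).

Definition sum_except (N i : nat) (f : nat -> R) : R :=
  fold_right Rplus 0 (map (fun j => if Nat.eqb j i then 0 else f j) (seq 0 N)).

Definition central_configuration (N : nat) (q : nat -> vec3) (m : nat -> R) : Prop :=
  (forall i j, (i < N)%nat -> (j < N)%nat -> i <> j -> q i <> q j) /\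
  exists c : R, forall i, (i < N)%nat ->
    let term (proj : vec3 -> R) :=
      sum_except N i (fun j =>
        m j * (1 / (vnorm (vsub (q j) (q i))) ^ 3 - c) * proj (vsub (q j) (q i))) in
    term vx = 0 /\ term vy = 0 /\ term vz = 0.

(* The configuration of the statement (0-based: index k stands for q_{k+1}). *)
Definition tet_config (t : R) (k : nat) : vec3 :=
  match k with
  | 0%nat => (1, 1, 1)
  | 1%nat => (-1, -1, 1)
  | 2%nat => (-1, 1, -1)
  | 3%nat => (1, -1, -1)
  | 4%nat => (t, t, t)
  | 5%nat => (-t, -t, t)
  | 6%nat => (-t, t, -t)
  | _ => (t, -t, -t)
  end.

(* Main.v *)
Require Import Defs.
From Stdlib Require Import Reals Lra Lia List Psatz.
Open Scope R_scope.

Definition K (a b e g : R) (i j : nat) : R :=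
  if Nat.ltb i 4 then (if Nat.ltb j 4 then a else if Nat.eqb (j-4) i then b else e)
  else (if Nat.ltb j 4 then (if Nat.eqb (i-4) j then b else e) else g).

Lemma coef_eq t c i j : (i < 8)%nat -> (j < 8)%nat -> i <> j ->
  1 / (vnorm (vsub (tet_config t j) (tet_config t i))) ^ 3 - c =
  K (1 / sqrt 8 ^ 3 - c) (1 / sqrt (3 * (1 - t) ^ 2) ^ 3 - c)
    (1 / sqrt (3 + 2 * t + 3 * t ^ 2) ^ 3 - c) (1 / sqrt (8 * t ^ 2) ^ 3 - c) i j.
Proof.
  intros Hi Hj Hij.
  destruct i as [|[|[|[|[|[|[|[|i]]]]]]]]; try lia;
  destruct j as [|[|[|[|[|[|[|[|j]]]]]]]]; try lia;
  cbv [K tet_config vsub vx vy vz vnorm fst snd Nat.ltb Nat.leb Nat.eqb Nat.sub];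
  match goal with |- 1 / sqrt ?X ^ 3 - c = 1 / sqrt ?Y ^ 3 - c =>
    replace X with Y by ring end; reflexivity.
Qed.

Lemma sum_ext N i f g : (forall j, (j < N)%nat -> j <> i -> f j = g j) ->
  sum_except N i f = sum_except N i g.
Proof.
  intros H. unfold sum_except. f_equal. apply map_ext_in.
  intros j Hj. apply in_seq in Hj. destruct (Nat.eqb_spec j i); auto. apply H; lia.
Qed.

Lemma eqs (t : R) (m : nat -> R) c :
  (forall i, (i < 8)%nat ->
    let term (proj : vec3 -> R) :=
      sum_except 8 i (fun j =>
        m j * (1 / (vnorm (vsub (tet_config t j) (tet_config t i))) ^ 3 - c) * proj (vsub (tet_config t j) (tet_config t i))) in
    term vx = 0 /\ term vy = 0 /\ term vz = 0) ->
  let s := (1 - t) * ((1 / sqrt (3 * (1 - t) ^ 2) ^ 3 - c) - (1 / sqrt (3 + 2 * t + 3 * t ^ 2) ^ 3 - c)) in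
  s * (m 0%nat - m 1%nat) = 0 /\ s * (m 1%nat - m 2%nat) = 0 /\ s * (m 2%nat - m 3%nat) = 0 /\
  s * (m 4%nat - m 5%nat) = 0 /\ s * (m 5%nat - m 6%nat) = 0 /\ s * (m 6%nat - m 7%nat) = 0.
Proof.
  intros H s. unfold s; clear s.
  assert (E : forall i, (i < 8)%nat -> forall proj : vec3 -> R,
    sum_except 8 i (fun j =>
        m j * (1 / (vnorm (vsub (tet_config t j) (tet_config t i))) ^ 3 - c) * proj (vsub (tet_config t j) (tet_config t i)))
    = sum_except 8 i (fun j => m j * K (1 / sqrt 8 ^ 3 - c) (1 / sqrt (3 * (1 - t) ^ 2) ^ 3 - c)
    (1 / sqrt (3 + 2 * t + 3 * t ^ 2) ^ 3 - c) (1 / sqrt (8 * t ^ 2) ^ 3 - c) i j * proj (vsub (tet_config t j) (tet_config t i)))).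
  { intros i Hi proj. apply sum_ext. intros j Hj Hji. rewrite coef_eq; auto. }
  generalize (1 / sqrt 8 ^ 3 - c) (1 / sqrt (3 * (1 - t) ^ 2) ^ 3 - c)
    (1 / sqrt (3 + 2 * t + 3 * t ^ 2) ^ 3 - c) (1 / sqrt (8 * t ^ 2) ^ 3 - c) E.
  clear E. intros a b e g E.
  pose proof (H 0%nat ltac:(lia)) as [H0x [H0y H0z]].
  pose proof (H 1%nat ltac:(lia)) as [H1x [H1y H1z]].
  pose proof (H 2%nat ltac:(lia)) as [H2x [H2y H2z]].
  pose proof (H 3%nat ltac:(lia)) as [H3x [H3y H3z]].
  pose proof (H 4%nat ltac:(lia)) as [H4x [H4y H4z]].
  pose proof (H 5%nat ltac:(lia)) as [H5x [H5y H5z]].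
  pose proof (H 6%nat ltac:(lia)) as [H6x [H6y H6z]].
  pose proof (H 7%nat ltac:(lia)) as [H7x [H7y H7z]].
  clear H.
  repeat match goal with
  | Hq : sum_except 8 ?i _ = 0 |- _ => rewrite E in Hq by lia;
      cbv [sum_except K tet_config vsub vx vy vz fst snd Nat.ltb Nat.leb Nat.eqb Nat.sub seq map fold_right] in Hq
  end.
  clear E.
  repeat split; lra.
Qed.

Lemma be_ne t c : 0 < t < 1 ->
  (1 / sqrt (3 * (1 - t) ^ 2) ^ 3 - c) - (1 / sqrt (3 + 2 * t + 3 * t ^ 2) ^ 3 - c) <> 0.
Proof.
  intros Ht.
  assert (h1 : 0 < sqrt (3 * (1 - t) ^ 2)) by (apply sqrt_lt_R0; nra).
  assert (h2 : sqrt (3 * (1 - t) ^ 2) < sqrt (3 + 2 * t + 3 * t ^ 2)) by (apply sqrt_lt_1; nra).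
  set (x := sqrt (3 * (1 - t) ^ 2)) in *. set (y := sqrt (3 + 2 * t + 3 * t ^ 2)) in *.
  assert (h3 : x ^ 3 < y ^ 3).
  { assert (0 < (y - x) * (y ^ 2 + x * y + x ^ 2)) by (apply Rmult_lt_0_compat; nra). nra. }
  assert (h4 : 0 < x ^ 3) by (apply pow_lt; lra).
  assert (h5 : 1 / y ^ 3 < 1 / x ^ 3).
  { unfold Rdiv. rewrite !Rmult_1_l. apply Rinv_lt_contravar; nra. }
  lra.
Qed.

Theorem theorem7 (t : R) (m : nat -> R) :
  0 < t < 1 ->
  (forall k, (k < 8)%nat -> 0 < m k) ->
  central_configuration 8 (tet_config t) m ->
  m 0%nat = m 1%nat /\ m 1%nat = m 2%nat /\ m 2%nat = m 3%nat /\
  m 4%nat = m 5%nat /\ m 5%nat = m 6%nat /\ m 6%nat = m 7%nat.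
Proof.
  intros Ht Hm [_ [c Hc]].
  pose proof (eqs t m c Hc) as E. cbv zeta in E.
  pose proof (be_ne t c Ht) as Hbe.
  assert (Hs : (1 - t) * ((1 / sqrt (3 * (1 - t) ^ 2) ^ 3 - c) - (1 / sqrt (3 + 2 * t + 3 * t ^ 2) ^ 3 - c)) <> 0).
  { apply Rmult_integral_contrapositive_currified; lra. }
  destruct E as [E1 [E2 [E3 [E4 [E5 E6]]]]].
  repeat split; apply Rminus_diag_uniq;
  [ destruct (Rmult_integral _ _ E1) | destruct (Rmult_integral _ _ E2)
  | destruct (Rmult_integral _ _ E3) | destruct (Rmult_integral _ _ E4)
  | destruct (Rmult_integral _ _ E5) | destruct (Rmult_integral _ _ E6) ];
  tauto.
Qed.
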